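(* Let $r\ge 2$, let $\lambda,\mu\in\Lambda$ with $\lambda\sim_e\mu$, and let $s\in\mathbb{Z}$. Then $\eta(\lambda,s)\xrightarrow{r}_1\eta(\mu,s)$ (as elements of $\mathcal{A}_r^e$) if and only if $\Phi_r(\lambda,s)\xrightarrow{e}_1\Phi_r(\mu,s)$ (as elements of $\mathcal{A}_e^r$).
   Context: Fix an integer $e\ge 2$. A partition is a weakly decreasing sequence $\lambda=(\lambda_1,\lambda_2,\dots)$ of non-negative integers with finite sum $|\lambda|$; $\Lambda$ denotes the set of partitions and $\Lambda^{(m)}$ the set of $m$-multipartitions, i.e. $m$-tuples $\boldsymbol\lambda=(\lambda^{(1)},\dots,\lambda^{(m)})$ of partitions, with $|\boldsymbol\lambda|=\sum_k|\lambda^{(k)}|$. A $\beta$-set is a subset $B\subseteq\mathbb{Z}$ containing all sufficiently small integers and no sufficiently large ones. For $\lambda\in\Lambda$ and $s\in\mathbb{Z}$ set $B_s(\lambda)=\{\lambda_i-i+s : i\ge 1\}$; every $\beta$-set equals $B_s(\lambda)$ for a unique pair $(\lambda,s)$. For $N\ge 2$ let $\mathcal{A}_N=\Lambda\times\mathbb{Z}$ (abacus configurations with $N$ runners) and $\mathcal{A}_N^m=\Lambda^{(m)}\times\mathbb{Z}^m$, where $(\boldsymbol\lambda,\mathbf{s})$ is identified with the $m$-tuple of $\beta$-sets $(B_{s_1}(\lambda^{(1)}),\dots,B_{s_m}(\lambda^{(m)}))$. The map $\eta$: for $(\lambda,s)\in\mathcal{A}_e$ with $B=B_s(\lambda)$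 and $0\le i<e$, the set $C_i=\{(b-i)/e : b\in B,\ b\equiv i \bmod e\}$ is a $\beta$-set, so $C_i=B_{t_i}(\rho_i)$ for a unique $(\rho_i,t_i)\in\Lambda\times\mathbb{Z}$; set $\eta(\lambda,s)=((\rho_0,\dots,\rho_{e-1}),(t_0,\dots,t_{e-1}))\in\Lambda^{(e)}\times\mathbb{Z}^e$, which we also regard as an element of $\mathcal{A}_r^e$. The $e$-weight of $\lambda$ is $\mathrm{wt}(\lambda)=\sum_i|\rho_i|$. For $\lambda,\mu\in\Lambda$ write $\lambda\sim_e\mu$ if $|\lambda|=|\mu|$, $\mathrm{wt}(\lambda)=\mathrm{wt}(\mu)$ and $\lambda,\mu$ have the same $e$-core (equivalently, $(\lambda,s)$ and $(\mu,s)$ have the same $t$-component under $\eta$ and the same weight, for any $s$). Moves on $\mathcal{A}_N^m$, for $(\boldsymbol\lambda,\mathbf{s}),(\boldsymbol\mu,\mathbf{s})$ with the same $\mathbf{s}$: (1) $(\boldsymbol\lambda,\mathbf{s})\xrightarrow{N}_1(\boldsymbol\mu,\mathbf{s})$ if for some $k_1,k_2\in\{1,\dots,m\}$ the tuple of $\beta$-sets of $(\boldsymbol\mu,\mathbf{s})$ is obtained from that of $(\boldsymbol\lambda,\mathbf{s})$ by replacing an element $b$ of the $k_1$-th $\beta$-set by $b-N$ (not previously in that set) and then replacing an element $c$ of the $k_2$-th $\beta$-set by $c+N$ (not previously in that set). (2) $(\boldsymbol\lambda,\mathbf{s})\xrightarrow{N}_2(\boldsymbol\mu,\mathbf{s})$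 if there exist $k_1,k_2\in\{1,\dots,m\}$, $b_1,b_2\in\mathbb{Z}$ with $b_1\equiv b_2\bmod N$, and $h>0$, such that $b_1\in B_{s_{k_1}}(\lambda^{(k_1)})$, $b_1+h\notin B_{s_{k_1}}(\lambda^{(k_1)})$, $b_2\notin B_{s_{k_2}}(\lambda^{(k_2)})$, $b_2+h\in B_{s_{k_2}}(\lambda^{(k_2)})$, and the $\beta$-sets of $(\boldsymbol\mu,\mathbf{s})$ agree with those of $(\boldsymbol\lambda,\mathbf{s})$ except that $b_1$ is replaced by $b_1+h$ in component $k_1$ and $b_2+h$ is replaced by $b_2$ in component $k_2$. Uglov's map: for $1\le k\le r$ define $\psi_k:\mathbb{Z}\to\mathbb{Z}$ by $\psi_k(ae+i)=((a+1)r-k)e+i$ for $a\in\mathbb{Z}$, $0\le i<e$. For $(\boldsymbol\lambda,\mathbf{s})\in\mathcal{A}_e^r$ the set $B=\bigsqcup_{k=1}^r\psi_k(B_{s_k}(\lambda^{(k)}))$ is a $\beta$-set, and $\Psi_r(\boldsymbol\lambda,\mathbf{s})$ is the unique $(\tilde\lambda,\tilde s)\in\mathcal{A}_e$ with $B_{\tilde s}(\tilde\lambda)=B$. $\Psi_r:\mathcal{A}_e^r\to\mathcal{A}_e$ is a bijection; $\Phi_r=\Psi_r^{-1}$. *)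

(* Defs.v *)
From mathcomp Require Import all_boot all_order all_algebra.
Unset Strict Implicit. Unset Printing Implicit Defensive.
From mathcomp Require Import intdiv.
Import Order.TTheory GRing.Theory Num.Theory.
Local Open Scope ring_scope.

Definition is_partition (l : seq nat) : bool :=
  sorted geq l && all (fun a => (0 < a)%N) l.

Definition psize (l : seq nat) : nat := sumn l.

(* beta-set B_s(lambda) = { lambda_i - i + s : i >= 1 } (lambda_i = 0 for
   i > size lambda), as a boolean predicate on int. *)
Definition beta (l : seq nat) (s : int) (x : int) : bool :=
  (x < s - (size l)%:Z) ||
  has (fun i => x == (nth 0%N l i)%:Z - (i.+1)%:Z + s) (iota 0 (size l)).

Definition zrange (L U : int) : seq int :=
  [seq L + k%:Z | k <- iota 0 (absz (U - L))].

(* The unique (rho, t) with B = B_t(rho), computed from a beta-set B and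
   bounds L <= U such that B contains every x < L and no x >= U. *)
Definition from_beta (B : int -> bool) (L U : int) : seq nat * int :=
  let S := [seq x <- rev (zrange L U) | B x] in
  let n := size S in
  let t := L + n%:Z in
  ([seq a <- [seq absz ((nth (0:int) S i + (i.+1)%:Z - t)%R) | i <- iota 0 n] | (0 < a)%N],
   t).

Definition betaL (l : seq nat) (s : int) : int := s - (size l)%:Z.
Definition betaU (l : seq nat) (s : int) : int := s + (foldr maxn 0%N l)%:Z.

(* eta(lambda, s) : the e-quotient with charges, an element of A_r^e
   indexed by i : 'I_e (i = 0..e-1). *)
Definition eta (e : nat) (l : seq nat) (s : int) (i : 'I_e) : seq nat * int :=
  from_beta (fun y => beta l s (e%:Z * y + (i : nat)%:Z))
            ((betaL l s %/ e%:Z)%Z - 1) ((betaU l s %/ e%:Z)%Z + 1).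

(* e-weight of lambda (independent of the charge; computed with s = 0) *)
Definition wt (e : nat) (l : seq nat) : nat :=
  \sum_(i < e) psize (eta e l 0 i).1.

(* lambda ~_e mu : same size, same weight, same e-core; the latter is
   expressed (as in the paper) by equality of the t-components of eta. *)
Definition sim_e (e : nat) (l m : seq nat) : Prop :=
  psize l = psize m /\ wt e l = wt e m /\
  (forall i : 'I_e, (eta e l 0 i).2 = (eta e m 0 i).2).

(* Uglov's psi_k (1 <= k <= r): psi_k(a e + i) = ((a+1) r - k) e + i *)
Definition psi (e r k : nat) (y : int) : int :=
  ((((y %/ e%:Z)%Z + 1) * r%:Z - k%:Z) * e%:Z + (y %% e%:Z)%Z).

(* Phi_r = Psi_r^{-1} : A_e -> A_e^r.  Since the psi_k have pairwise
   disjoint images covering Z, the k-th beta-set of Phi_r(lambda,s) is the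
   preimage psi_k^{-1}(B_s(lambda)).  Component j : 'I_r is k = j+1. *)
Definition Phi (e r : nat) (l : seq nat) (s : int) (j : 'I_r) : seq nat * int :=
  from_beta (fun y => beta l s (psi e r j.+1 y))
            ((betaL l s %/ r%:Z)%Z - e%:Z - 1) ((betaU l s %/ r%:Z)%Z + e%:Z + 1).

Definition upd (m : nat) (B : 'I_m -> int -> bool) (k : 'I_m) (old new : int)
  : 'I_m -> int -> bool :=
  fun j x => if j == k then (if x == new then true
                            else if x == old then false else B j x)
             else B j x.

(* The move  X  -N->_1  Y  on A_N^m (X, Y given as m-tuples of
   (partition, charge); the charges must agree). *)
Definition move1 (N m : nat) (X Y : 'I_m -> seq nat * int) : Prop :=
  (forall j, (X j).2 = (Y j).2) /\
  let B := fun j => beta (X j).1 (X j).2 in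
  exists (k1 k2 : 'I_m) (b c : int),
    B k1 b /\ ~~ B k1 (b - N%:Z) /\
    let B' := upd m B k1 b (b - N%:Z) in
    B' k2 c /\ ~~ B' k2 (c + N%:Z) /\
    (forall j x, beta (Y j).1 (Y j).2 x = upd m B' k2 c (c + N%:Z) j x).

(* Main.v *)
Require Import Defs.
From mathcomp Require Import all_boot all_order all_algebra.
From mathcomp Require Import zify intdiv.
Import Order.TTheory GRing.Theory Num.Theory.
Local Open Scope ring_scope.

Lemma divmod_uniq (x a i d : int) : 0 < d -> 0 <= i < d -> x = a * d + i ->
  (x %/ d)%Z = a /\ (x %% d)%Z = i.
Proof.
move=> d0 hi ->; have dn0 : d != 0 by lia.
split.
  rewrite divzMDl // divz_small ?addr0 //; lia.
by rewrite modzMDl modz_small.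
Qed.

Lemma divmodP (x d : int) : 0 < d ->
  x = (x %/ d)%Z * d + (x %% d)%Z /\ 0 <= (x %% d)%Z < d.
Proof.
move=> d0; split; first exact: divz_eq.
by rewrite modz_ge0 ?ltz_pmod //; lia.
Qed.

Lemma mem_zrange L U x : L <= U -> (x \in zrange L U) = (L <= x < U).
Proof.
move=> LU; apply/mapP/idP.
  case=> k; rewrite mem_iota => /andP[_ hk] ->; lia.
move=> hx; exists (absz (x - L)); last by lia.
rewrite mem_iota; lia.
Qed.

Lemma uniq_zrange L U : uniq (zrange L U).
Proof.
rewrite map_inj_uniq ?iota_uniq // => a b /= h; lia.
Qed.

Lemma zrange_cat L M U : L <= M -> M <= U ->
  zrange L U = zrange L M ++ zrange M U.
Proof.
move=> LM MU; rewrite /zrange.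
have -> : absz (U - L) = (absz (M - L) + absz (U - M))%N by lia.
rewrite iotaD map_cat; congr (_ ++ _).
rewrite -[in iota (absz (M - L)) _](addn0 (absz (M - L))) iotaDl -map_comp.
apply: eq_map => k /=; lia.
Qed.

Lemma count_zrange_all (P : pred int) L U : L <= U ->
  (forall x, L <= x < U -> P x) -> count P (zrange L U) = absz (U - L).
Proof.
move=> LU h; rewrite -[RHS](size_iota 0) -(size_map (fun k : nat => L + k%:Z)).
rewrite -count_predT; apply: eq_in_count => x; rewrite mem_zrange // => /h ->//.
Qed.

Lemma count_zrange_none (P : pred int) L U : L <= U ->
  (forall x, L <= x < U -> ~~ P x) -> count P (zrange L U) = 0%N.
Proof.
move=> LU h; rewrite -(count_pred0 (zrange L U)); apply: eq_in_count => x.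
by rewrite mem_zrange // => /h /negbTE ->.
Qed.

Definition valid (P : pred int) (L U : int) :=
  L <= U /\ (forall x, x < L -> P x) /\ (forall x, U <= x -> ~~ P x).

Lemma cnt_mono P L U L' U' : L' <= L -> U <= U' -> valid P L U ->
  L' + (count P (zrange L' U'))%:Z = L + (count P (zrange L U))%:Z.
Proof.
move=> h1 h2 [LU [hL hU]].
rewrite (@zrange_cat L' L U' h1 (le_trans LU h2)) (@zrange_cat L U U' LU h2) !count_cat.
rewrite (@count_zrange_all P L' L) //; last by move=> x hx; apply: hL; lia.
rewrite (@count_zrange_none P U U') //; last by move=> x hx; apply: hU; lia.
lia.
Qed.

Lemma valid_widen P L U L' U' : L' <= L -> U <= U' -> valid P L U -> valid P L' U'.
Proof.
move=> h1 h2 [LU [hL hU]]; split; first lia.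
split=> x hx; [apply: hL|apply: hU]; lia.
Qed.

Lemma cnt_eq P L U L' U' : valid P L U -> valid P L' U' ->
  L + (count P (zrange L U))%:Z = L' + (count P (zrange L' U'))%:Z.
Proof.
move=> v1 v2.
rewrite -(@cnt_mono P L U (Num.min L L') (Num.max U U')) //; try lia.
rewrite -(@cnt_mono P L' U' (Num.min L L') (Num.max U U')) //; lia.
Qed.

Lemma sorted_pos (s : seq nat) : sorted geq s ->
  [seq a <- s | (0 < a)%N] = take (count (fun a => 0 < a)%N s) s /\
  forall i, (count (fun a => 0 < a)%N s <= i)%N -> nth 0%N s i = 0%N.
Proof.
elim: s => [|a s IH] /=; first by split=> // i; rewrite nth_nil.
move=> hp; have hs := path_sorted hp.
have hall : all (geq a) s.
  by apply: order_path_min hp => x y z /= h1 h2; apply: leq_trans h2 h1.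
have [IH1 IH2] := IH hs.
case: a hp hall => [|a] hp hall /=.
  have h0 : forall x, x \in s -> x = 0%N.
    by move=> x /(allP hall) /=; rewrite leqn0 => /eqP.
  have -> : [seq a <- s | (0 < a)%N] = [::].
    apply/eqP; rewrite -size_eq0 size_filter -leqn0 leqNgt -has_count.
    by apply/hasP => -[x /h0 ->].
  have hc : count (fun a => (0 < a)%N) s = 0%N.
    apply/eqP; rewrite -leqn0 leqNgt -has_count; by apply/hasP => -[x /h0 ->].
  rewrite hc; split=> // -[|i] _ //=.
  case: (ltnP i (size s)) => hi; first by apply: h0; apply: mem_nth.
  by rewrite nth_default.
rewrite IH1; split=> // -[|i] //= hi; apply: IH2; by rewrite add1n in hi.
Qed.

Lemma from_beta_charge P L U :
  (from_beta P L U).2 = L + (count P (zrange L U))%:Z.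
Proof. by rewrite /from_beta /= size_filter count_rev. Qed.

Lemma nat_le_ex (a b : nat) : (a <= b)%N -> exists k, b = (a + k)%N.
Proof. by move=> h; exists (b - a)%N; rewrite subnKC. Qed.

Lemma from_beta_beta P L U : valid P L U ->
  forall x, beta (from_beta P L U).1 (from_beta P L U).2 x = P x.
Proof.
move=> [LU [hL hU]] x; rewrite /from_beta /=.
set S := [seq x <- rev (zrange L U) | P x].
set n := size S; set t := L + n%:Z.
have memS y : (y \in S) = (L <= y < U) && P y.
  by rewrite mem_filter mem_rev mem_zrange // andbC.
have sortS : sorted (fun a b => b < a) S.
  apply: sorted_filter; first by move=> a b c h1 h2; apply: lt_trans h2 h1.
  rewrite rev_sorted; apply: (homo_sorted (e := ltn)); last exact: iota_ltn_sorted.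
  move=> a b /= h; lia.
have step j : (j.+1 < n)%N -> nth 0 S j.+1 < nth 0 S j.
  move=> hj; apply: (sorted_ltn_nth (leT := fun a b => b < a)) => //.
  - by move=> a b c h1 h2; apply: lt_trans h2 h1.
  - rewrite inE -/n; lia.
have gap i j : (i <= j)%N -> (j < n)%N -> nth 0 S j + (j - i)%:Z <= nth 0 S i.
  move=> hij; have [k ->] := @nat_le_ex i j hij; rewrite addKn.
  elim: k => [|k IHk] hk; first by rewrite addn0 addr0.
  have := step (i + k)%N; rewrite addnS in hk *; move=> /(_ hk) h.
  have := IHk (ltnW hk); lia.
have lowS i : (i < n)%N -> L <= nth 0 S i.
  move=> hi; have : nth 0 S i \in S by apply: mem_nth.
  by rewrite memS => /andP[/andP[]].
have inS i : (i < n)%N -> P (nth 0 S i).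
  move=> hi; have : nth 0 S i \in S by apply: mem_nth.
  by rewrite memS => /andP[].
pose v i := nth 0 S i + (i.+1)%:Z - t.
have vpos i : (i < n)%N -> 0 <= v i.
  move=> hi; have := gap i n.-1; have := lowS n.-1; rewrite /v /t; lia.
have vmono i j : (i <= j)%N -> (j < n)%N -> v j <= v i.
  move=> hij hj; have := gap i j hij hj; rewrite /v; lia.
set s' := [seq absz ((nth (0:int) S i + (i.+1)%:Z - t)%R) | i <- iota 0 n].
have s'E i : (i < n)%N -> nth 0%N s' i = absz (v i).
  by move=> hi; rewrite (nth_map 0%N) ?size_iota // nth_iota.
have sorts' : sorted geq s'.
  apply/(sortedP 0%N) => i; rewrite size_map size_iota => hi.
  rewrite !s'E //; try lia.
  have := vmono i i.+1 (leqnSn i) hi; have := vpos i.+1 hi; rewrite /geq /=; lia.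
have [fE zE] := sorted_pos _ sorts'.
rewrite fE /beta size_takel ?count_size //.
set p := count _ s'.
have pn : (p <= n)%N by rewrite /p -[n](size_iota 0) -(size_map (fun i => absz ((nth (0:int) S i + (i.+1)%:Z - t)%R))) count_size.
have v0 i : (p <= i)%N -> (i < n)%N -> v i = 0.
  move=> h1 h2; have := zE i h1; rewrite s'E //; have := vpos i h2; lia.

have -> : has (fun i => x == (nth 0%N (take p s') i)%:Z - (i.+1)%:Z + t) (iota 0 p)
        = has (fun i => x == nth 0 S i) (iota 0 p).
  apply: eq_in_has => i; rewrite mem_iota add0n => /andP[_ hi].
  rewrite nth_take // s'E; last by lia.
  have := vpos i (leq_trans hi pn); rewrite /v; move=> h.
  congr (x == _); lia.
apply/idP/idP.
  case/orP=> [hx|/hasP[i]].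
    case: (ltP x L) => hxL; first exact: hL.
    pose i := absz ((t - 1 - x)%R).
    have hi1 : (p <= i)%N by rewrite /i; lia.
    have hi2 : (i < n)%N by rewrite /i /t in hx hxL *; lia.
    have := v0 i hi1 hi2; rewrite /v => h.
    have -> : x = nth 0 S i by rewrite /i in h *; lia.
    exact: inS.
  rewrite mem_iota add0n => /andP[_ hi] /eqP ->; apply: inS; lia.
move=> Px; case: (ltP x L) => hxL; first by apply/orP; left; rewrite /t; lia.
have xU : x < U by case: (ltP x U) => // /hU; rewrite Px.
have xS : x \in S by rewrite memS Px; lia.
pose i := index x S.
have hi : (i < n)%N by rewrite index_mem.
have xE : nth 0 S i = x by apply: nth_index.
case: (ltnP i p) => hip.
  by apply/orP; right; apply/hasP; exists i; rewrite ?mem_iota ?xE //.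
apply/orP; left; have := v0 i hip hi; rewrite /v xE; lia.
Qed.

Definition move1b (N m : nat) (BX BY : 'I_m -> int -> bool) : Prop :=
  exists (k1 k2 : 'I_m) (b c : int),
    BX k1 b /\ ~~ BX k1 (b - N%:Z) /\
    let B' := upd m BX k1 b (b - N%:Z) in
    B' k2 c /\ ~~ B' k2 (c + N%:Z) /\
    (forall j x, BY j x = upd m B' k2 c (c + N%:Z) j x).

Lemma upd_ext m (B1 B2 : 'I_m -> int -> bool) k o n :
  (forall j x, B1 j x = B2 j x) ->
  forall j x, upd m B1 k o n j x = upd m B2 k o n j x.
Proof. by move=> h j x; rewrite /upd !h. Qed.

Lemma count_split {T : Type} (a b : pred T) s :
  count a s = (count (fun x => a x && b x) s + count (fun x => a x && ~~ b x) s)%N.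
Proof.
elim: s => //= y s ->; case: (a y); case: (b y) => /=; rewrite ?add0n ?addnA //.
lia.
Qed.

Lemma cnt_upd1 (f : pred int) (W : seq int) old new :
  uniq W -> old \in W -> new \in W -> f old -> ~~ f new ->
  count (fun x => if x == new then true else if x == old then false else f x) W
  = count f W.
Proof.
move=> uW oW nW fo fn.
have on : old != new by apply/eqP => e; move: fn; rewrite -e fo.
rewrite (count_split _ (pred1 new)) (count_split f (pred1 old)).
congr (_ + _)%N.
  rewrite (@eq_count _ _ (pred1 new)); last first.
    by move=> x /=; case: (x == new); rewrite ?andbF.
  rewrite (@eq_count _ (fun x => f x && (x == old)) (pred1 old)); last first.
    move=> x /=; case: (x =P old) => [->|_]; last by rewrite andbF.
    by rewrite fo.
  by rewrite !count_uniq_mem // oW nW.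
apply: eq_count => x /=.
case: (x =P new) => [->|hn] /=; first by rewrite (negbTE fn).
by case: (x =P old) => [->|ho] /=; rewrite ?andbF ?andbT.
Qed.

Lemma count_updm m (B : 'I_m -> int -> bool) k old new j W :
  (j = k -> old \in W /\ new \in W) -> uniq W -> B k old -> ~~ B k new ->
  count (upd m B k old new j) W = count (B j) W.
Proof.
move=> hW uW ho hn; rewrite /upd.
case: (j =P k) => [e|_]; last by [].
have [oW nW] := hW e; subst j.
rewrite -(cnt_upd1 _ _ _ _ uW oW nW ho hn); apply: eq_count => x /=; by [].
Qed.

Lemma move1_iff N m (X Y : 'I_m -> seq nat * int) PX LX UX PY LY UY :
  (0 < N)%N ->
  (forall j, X j = from_beta (PX j) (LX j) (UX j)) ->
  (forall j, valid (PX j) (LX j) (UX j)) ->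
  (forall j, Y j = from_beta (PY j) (LY j) (UY j)) ->
  (forall j, valid (PY j) (LY j) (UY j)) ->
  move1 N m X Y <-> move1b N m PX PY.
Proof.
move=> N0 hX vX hY vY.
have eX j x : beta (X j).1 (X j).2 x = PX j x by rewrite hX from_beta_beta.
have eY j x : beta (Y j).1 (Y j).2 x = PY j x by rewrite hY from_beta_beta.
rewrite /move1 /move1b; cbv zeta beta.
split.
  case=> _ [k1 [k2 [b [c [h1 [h2 [h3 [h4 h5]]]]]]]].
  exists k1, k2, b, c.
  have E1 := upd_ext _ _ _ k1 b (b - N%:Z) eX.
  have E2 := upd_ext _ _ _ k2 c (c + N%:Z) E1.
  rewrite -!eX -!E1; do 4!split => //.
  by move=> j x; rewrite -E2 -h5 eY.
case=> k1 [k2 [b [c [h1 [h2 [h3 [h4 h5]]]]]]].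
have E1 := upd_ext _ _ _ k1 b (b - N%:Z) eX.
have E2 := upd_ext _ _ _ k2 c (c + N%:Z) E1.
split; last first.
  exists k1, k2, b, c.
  rewrite !eX !E1; do 4!split => //.
  by move=> j x; rewrite E2 -h5 eY.
move=> j.
have [LXU [hLX hUX]] := vX j; have [LYU [hLY hUY]] := vY j.
pose Wl := Num.min (LX j) (LY j); pose Wu := Num.max (UX j) (UY j).
have vXW : valid (PX j) Wl Wu by apply: valid_widen (vX j); lia.
have vYW : valid (PY j) Wl Wu by apply: valid_widen (vY j); lia.
rewrite hX hY !from_beta_charge (cnt_eq _ _ _ _ _ (vX j) vXW) (cnt_eq _ _ _ _ _ (vY j) vYW).
congr (_ + _%:Z); symmetry.
rewrite (eq_count (a2 := upd m (upd m PX k1 b (b - N%:Z)) k2 c (c + N%:Z) j)); last first.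
  by move=> x; rewrite h5.
rewrite count_updm ?uniq_zrange //; last first.
  move=> ej; subst j.
  have nNc : (c == c + N%:Z) = false by apply/eqP; lia.
  have a1 : PY k2 (c + N%:Z) by rewrite h5 /upd eqxx eqxx.
  have a2 : ~~ PY k2 c by rewrite h5 /upd eqxx nNc eqxx.
  have : c + N%:Z < UY k2 by case: (ltP (c + N%:Z) (UY k2)) => // /hUY; rewrite a1.
  have : LY k2 <= c by case: (ltP c (LY k2)) => // /hLY; rewrite (negbTE a2).
  move=> q1 q2; rewrite !mem_zrange; lia.
rewrite count_updm ?uniq_zrange //.
move=> ej; subst j.
have : b < UX k1 by case: (ltP b (UX k1)) => // /hUX; rewrite h1.
have : LX k1 <= b - N%:Z by case: (ltP (b - N%:Z) (LX k1)) => // /hLX; rewrite (negbTE h2).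
move=> q1 q2; rewrite !mem_zrange; lia.
Qed.

Lemma if3 (A B C q : bool) :
  (if A then (if B then true else if C then false else q) else q)
  = (if A && B then true else if A && C then false else q).
Proof. by case: A. Qed.

Lemma upd_if m (P : 'I_m -> int -> bool) k0 o n k x :
  upd m P k0 o n k x =
  (if (k == k0) && (x == n) then true else if (k == k0) && (x == o) then false else P k x).
Proof. by rewrite /upd if3. Qed.

Lemma upd_transfer m m' (P : 'I_m -> int -> bool) (Q : 'I_m' -> int -> bool)
  (fk : 'I_m -> int -> 'I_m') (fx : 'I_m -> int -> int) k0 o n :
  (forall k x k2 y, fk k x = fk k2 y -> fx k x = fx k2 y -> k = k2 /\ x = y) ->
  fk k0 n = fk k0 o ->
  (forall k x, P k x = Q (fk k x) (fx k x)) ->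
  forall k x, upd m P k0 o n k x
            = upd m' Q (fk k0 o) (fx k0 o) (fx k0 n) (fk k x) (fx k x).
Proof.
move=> inj en hPQ k x.
have pe k1 x1 k2 y : (fk k1 x1 == fk k2 y) && (fx k1 x1 == fx k2 y) = (k1 == k2) && (x1 == y).
  apply/andP/andP => [[/eqP a /eqP b]|[/eqP -> /eqP ->]] //.
  by have [-> ->] := inj _ _ _ _ a b.
by rewrite !upd_if -{1}en !pe hPQ.
Qed.

Lemma transfer m m' N N' (PX PY : 'I_m -> int -> bool) (QX QY : 'I_m' -> int -> bool)
  (fk : 'I_m -> int -> 'I_m') (fx : 'I_m -> int -> int)
  (gk : 'I_m' -> int -> 'I_m) (gx : 'I_m' -> int -> int) :
  (forall k x, gk (fk k x) (fx k x) = k /\ gx (fk k x) (fx k x) = x) ->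
  (forall k' y, fk (gk k' y) (gx k' y) = k' /\ fx (gk k' y) (gx k' y) = y) ->
  (forall k x, fk k (x - N%:Z) = fk k x /\ fx k (x - N%:Z) = fx k x - N'%:Z) ->
  (forall k x, PX k x = QX (fk k x) (fx k x)) ->
  (forall k x, PY k x = QY (fk k x) (fx k x)) ->
  move1b N m PX PY -> move1b N' m' QX QY.
Proof.
move=> H1 H2 H3 hX hY.
have inj k x k2 y : fk k x = fk k2 y -> fx k x = fx k2 y -> k = k2 /\ x = y.
  move=> a b; have [c1 d1] := H1 k x; have [c2 d2] := H1 k2 y.
  by split; [rewrite -[in LHS]c1 -[in RHS]c2 a b | rewrite -[in LHS]d1 -[in RHS]d2 a b].
have Hp k x : fk k (x + N%:Z) = fk k x /\ fx k (x + N%:Z) = fx k x + N'%:Z.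
  have [a b] := H3 k (x + N%:Z); rewrite addrK in a b; rewrite a b; split=> //.
  by rewrite subrK.
rewrite /move1b; cbv zeta.
case=> k1 [k2 [b [c [h1 [h2 [h3 [h4 h5]]]]]]].
exists (fk k1 b), (fk k2 c), (fx k1 b), (fx k2 c).
have [e1 e2] := H3 k1 b; have [e3 e4] := Hp k2 c.
have U1 := upd_transfer _ _ _ _ _ _ k1 b (b - N%:Z) inj e1 hX.
rewrite e2 in U1.
have U2 := upd_transfer _ _ _ _ _ _ k2 c (c + N%:Z) inj e3 U1.
rewrite e4 in U2.
split; first by rewrite -hX.
split; first by rewrite -e2 -e1 -hX.
split; first by rewrite -U1.
split; first by rewrite -e4 -e3 -U1.
move=> j y; have [a1 a2] := H2 j y.
transitivity (QY (fk (gk j y) (gx j y)) (fx (gk j y) (gx j y))); first by rewrite a1 a2.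
by rewrite -hY h5 U2 a1 a2.
Qed.

Lemma nth_le_max (l : seq nat) i : (nth 0%N l i <= foldr maxn 0%N l)%N.
Proof.
elim: l i => [|a l IH] [|i] //=; first by rewrite leq_maxl.
by apply: leq_trans (IH i) (leq_maxr _ _).
Qed.

Lemma beta_lt l s x : x < betaL l s -> beta l s x.
Proof. by rewrite /beta /betaL => ->. Qed.

Lemma beta_ge l s x : betaU l s <= x -> ~~ beta l s x.
Proof.
rewrite /beta /betaU => h; rewrite negb_or; apply/andP; split; first lia.
apply/hasPn => i; rewrite mem_iota => /andP[_ hi].
have := nth_le_max l i; lia.
Qed.

Lemma mulle (a b c : int) : 0 < c -> a <= b -> a * c <= b * c.
Proof. by move=> c0 h; rewrite ler_pM2r. Qed.

Lemma div_mono (x x' d : int) : 0 < d -> x <= x' -> (x %/ d)%Z <= (x' %/ d)%Z.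
Proof.
move=> d0 h; rewrite lez_divRL //; apply: le_trans h.
by apply: lez_floor; lia.
Qed.

Lemma valid_eta (e : nat) l s (i : nat) : (0 < e)%N -> (i < e)%N ->
  valid (fun y => beta l s (e%:Z * y + i%:Z))
        ((betaL l s %/ e%:Z)%Z - 1) ((betaU l s %/ e%:Z)%Z + 1).
Proof.
move=> e0 ie.
have e0' : 0 < e%:Z by lia.
have LU : betaL l s <= betaU l s by rewrite /betaL /betaU; lia.
have [dL mL] := divmodP (betaL l s) _ e0'.
have [dU mU] := divmodP (betaU l s) _ e0'.
set D := (betaL l s %/ e%:Z)%Z in dL *; set D' := (betaU l s %/ e%:Z)%Z in dU *.
have DD : D <= D' by apply: div_mono.
split; first lia.
split=> y hy.
  apply: beta_lt.
  have := mulle _ _ _ e0' (_ : y + 2 <= D); lia.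
apply: beta_ge.
have := mulle _ _ _ e0' (_ : D' + 1 <= y); lia.
Qed.

Lemma valid_phi (e r k : nat) l s : (0 < e)%N -> (0 < r)%N -> (0 < k <= r)%N ->
  valid (fun y => beta l s (psi e r k y))
        ((betaL l s %/ r%:Z)%Z - e%:Z - 1) ((betaU l s %/ r%:Z)%Z + e%:Z + 1).
Proof.
move=> e0 r0 hk.
have e0' : 0 < e%:Z by lia.
have r0' : 0 < r%:Z by lia.
have LU : betaL l s <= betaU l s by rewrite /betaL /betaU; lia.
have [dL mL] := divmodP (betaL l s) _ r0'.
have [dU mU] := divmodP (betaU l s) _ r0'.
set D := (betaL l s %/ r%:Z)%Z in dL *; set D' := (betaU l s %/ r%:Z)%Z in dU *.
have DD : D <= D' by apply: div_mono.
have ke : e%:Z <= k%:Z * e%:Z by have := mulle _ _ _ e0' (_ : 1 <= k%:Z); lia.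
have ke2 : k%:Z * e%:Z <= r%:Z * e%:Z by apply: mulle; lia.
split; first lia.
split=> y hy; rewrite /psi;
  have [dy my] := divmodP y _ e0';
  set a := (y %/ e%:Z)%Z in dy *; set i := (y %% e%:Z)%Z in dy my *.
  apply: beta_lt.
  have h1 : a * e%:Z + e%:Z <= D - 2 by lia.
  have := mulle _ _ _ r0' h1; lia.
apply: beta_ge.
have h1 : D' + 2 <= a * e%:Z by lia.
have := mulle _ _ _ r0' h1; lia.
Qed.

Lemma psi_eq (e r k : nat) y :
  psi e r k y = ((((y %/ e%:Z)%Z + 1) * r%:Z - k%:Z) * e%:Z + (y %% e%:Z)%Z).
Proof. by []. Qed.

Theorem lemma2p11 (e r : nat) (l m : seq nat) (s : int) :
  (2 <= e)%N -> (2 <= r)%N ->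
  is_partition l -> is_partition m ->
  sim_e e l m ->
  (move1 r e (eta e l s) (eta e m s) <-> move1 e r (Phi e r l s) (Phi e r m s)).
Proof.
move=> he hr _ _ _.
have e0 : (0 < e)%N by lia.
have r0 : (0 < r)%N by lia.
rewrite (move1_iff r e (eta e l s) (eta e m s)
   (fun i y => beta l s (e%:Z * y + (i : nat)%:Z))
   (fun i => (betaL l s %/ e%:Z)%Z - 1) (fun i => (betaU l s %/ e%:Z)%Z + 1)
   (fun i y => beta m s (e%:Z * y + (i : nat)%:Z))
   (fun i => (betaL m s %/ e%:Z)%Z - 1) (fun i => (betaU m s %/ e%:Z)%Z + 1)
   r0 (fun j => erefl) (fun j => valid_eta _ _ _ _ e0 (ltn_ord j))
   (fun j => erefl) (fun j => valid_eta _ _ _ _ e0 (ltn_ord j))).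
rewrite (move1_iff e r (Phi e r l s) (Phi e r m s)
   (fun j y => beta l s (psi e r (j : nat).+1 y))
   (fun j => (betaL l s %/ r%:Z)%Z - e%:Z - 1) (fun j => (betaU l s %/ r%:Z)%Z + e%:Z + 1)
   (fun j y => beta m s (psi e r (j : nat).+1 y))
   (fun j => (betaL m s %/ r%:Z)%Z - e%:Z - 1) (fun j => (betaU m s %/ r%:Z)%Z + e%:Z + 1)
   e0 (fun j => erefl) (fun j => valid_phi _ _ _ _ _ e0 r0 (ltn_ord j : (0 < (j:nat).+1 <= r)%N))
   (fun j => erefl) (fun j => valid_phi _ _ _ _ _ e0 r0 (ltn_ord j : (0 < (j:nat).+1 <= r)%N))).
case: e he e0 => [//|e'] he e0; case: r hr r0 => [//|r'] hr r0.
set e := e'.+1; set r := r'.+1.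
have e0' : 0 < e%:Z by rewrite /e; lia.
have r0' : 0 < r%:Z by rewrite /r; lia.
pose fk (i : 'I_e) (q : int) : 'I_r := inord (r' - absz (q %% r%:Z)%Z).
pose fx (i : 'I_e) (q : int) : int := e%:Z * (q %/ r%:Z)%Z + (i : nat)%:Z.
pose gk (j : 'I_r) (y : int) : 'I_e := inord (absz (y %% e%:Z)%Z).
pose gx (j : 'I_r) (y : int) : int := ((y %/ e%:Z)%Z + 1) * r%:Z - ((j : nat).+1)%:Z.
have fxdm i q : ((fx i q) %/ e%:Z)%Z = (q %/ r%:Z)%Z /\ ((fx i q) %% e%:Z)%Z = (i : nat)%:Z.
  apply: divmod_uniq => //; last by rewrite /fx mulrC.
  have := ltn_ord i; rewrite -/e; lia.
have H1 k x : gk (fk k x) (fx k x) = k /\ gx (fk k x) (fx k x) = x.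
  have [a b] := fxdm k x; have [dx mx] := divmodP x _ r0'.
  split.
    apply: val_inj; rewrite /gk b /= inordK //; have := ltn_ord k; lia.
  rewrite /gx a /fk /= inordK; last by rewrite /r in mx *; lia.
  rewrite /r in mx dx *; lia.
have H2 k y : fk (gk k y) (gx k y) = k /\ fx (gk k y) (gx k y) = y.
  have [dy my] := divmodP y _ e0'.
  have s1 : 0 <= (r' - k)%N%:Z < r%:Z by have := ltn_ord k; rewrite /r; lia.
  have s2 : gx k y = (y %/ e%:Z)%Z * r%:Z + (r' - k)%N%:Z.
    rewrite /gx; have := ltn_ord k; rewrite /r; lia.
  have [a b] := divmod_uniq (gx k y) ((y %/ e%:Z)%Z) ((r' - k)%N%:Z) r%:Z r0' s1 s2.
  split.
    apply: val_inj; rewrite /fk b /= inordK; have := ltn_ord k; rewrite /r; lia.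
  rewrite /fx a /gk inordK; last by rewrite /e in my *; lia.
  rewrite /e in my dy *; lia.
have psiE (j : 'I_r) y : psi e r j.+1 y = gx j y * e%:Z + (y %% e%:Z)%Z by [].
have gkv j y : ((gk j y : nat)%:Z) = (y %% e%:Z)%Z.
  have [dy my] := divmodP y _ e0'; rewrite /gk inordK; rewrite /e in my *; lia.
split.
  apply: (transfer _ _ _ _ _ _ _ _ fk fx gk gx H1 H2).
  - move=> k x; have [dx mx] := divmodP x _ r0'.
    have s2 : x - r%:Z = ((x %/ r%:Z)%Z - 1) * r%:Z + (x %% r%:Z)%Z by lia.
    have [a b] := divmod_uniq (x - r%:Z) ((x %/ r%:Z)%Z - 1) ((x %% r%:Z)%Z) r%:Z r0' mx s2.
    split; first by apply: val_inj; rewrite /fk b.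
    rewrite /fx a; lia.
  - move=> k x; rewrite psiE; have [_ b] := fxdm k x; have [_ c] := H1 k x.
    by rewrite b c mulrC.
  - move=> k x; rewrite psiE; have [_ b] := fxdm k x; have [_ c] := H1 k x.
    by rewrite b c mulrC.
apply: (transfer _ _ _ _ _ _ _ _ gk gx fk fx H2 H1).
- move=> k y; have [dy my] := divmodP y _ e0'.
  have s2 : y - e%:Z = ((y %/ e%:Z)%Z - 1) * e%:Z + (y %% e%:Z)%Z by lia.
  have [a b] := divmod_uniq (y - e%:Z) ((y %/ e%:Z)%Z - 1) ((y %% e%:Z)%Z) e%:Z e0' my s2.
  split; first by apply: val_inj; rewrite /gk b.
  rewrite /gx a; lia.
- by move=> k y; rewrite psiE gkv mulrC.
- by move=> k y; rewrite psiE gkv mulrC.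
Qed.
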